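(* Let $A_1A_2A_3$ be a gyrotriangle possessing a circumgyrocircle in the Einstein gyrovector space $\mathbb{R}^n_s$, $n\ge2$, $\gamma_{ij}=\gamma_{\ominus A_i\oplus A_j}$. For a parameter $0\le t_1\le1$ let $$P=\frac{(1-t_1)\gamma_{A_1}A_1+t_1\gamma_{A_2}A_2}{(1-t_1)\gamma_{A_1}+t_1\gamma_{A_2}}$$ (a point of the gyrosegment $A_1A_2$), and let $Q$ be the foot of the corresponding circumgyrocevian, i.e. the point other than $A_3$ where the gyroray from $A_3$ through $P$ meets the circumgyrocircle. Then $Q=\frac{m_1\gamma_{A_1}A_1+m_2\gamma_{A_2}A_2+m_3\gamma_{A_3}A_3}{m_1\gamma_{A_1}+m_2\gamma_{A_2}+m_3\gamma_{A_3}}$ with $m_1=\{\gamma_{13}-1+(\gamma_{23}-\gamma_{13})t_1\}(1-t_1)$, $m_2=\{\gamma_{13}-1+(\gamma_{23}-\gamma_{13})t_1\}t_1$, $m_3=-(\gamma_{12}-1)(1-t_1)t_1$.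
   Context: Fix $s>0$; $\mathbb{R}^n_s=\{v\in\mathbb{R}^n:\|v\|<s\}$ with Einstein addition $u\oplus v=\frac{1}{1+u\cdot v/s^2}\{u+\frac{1}{\gamma_u}v+\frac{1}{s^2}\frac{\gamma_u}{1+\gamma_u}(u\cdot v)u\}$, $\gamma_v=(1-\|v\|^2/s^2)^{-1/2}$, $\ominus v=-v$; gyrodistance $\|\ominus X\oplus Y\|$. Gyrosegments/gyrorays are Euclidean segments/rays intersected with the ball. A gyrotriangle $A_1A_2A_3$ has $\ominus A_1\oplus A_2,\ominus A_1\oplus A_3$ linearly independent; its circumgyrocircle is the set of points of the gyroplane $(A_1\oplus\mathrm{span}\{\ominus A_1\oplus A_2,\ominus A_1\oplus A_3\})\cap\mathbb{R}^n_s$ at gyrodistance $R$ from the point $O$ of that gyroplane equigyrodistant (distance $R$) from the vertices. Gyrobarycentric coordinates are homogeneous. *)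

(* Defs.v *)
From mathcomp Require Import all_boot all_order all_algebra.
Set Implicit Arguments. Unset Strict Implicit. Unset Printing Implicit Defensive.
Import Order.TTheory GRing.Theory Num.Theory.
Local Open Scope ring_scope.

Section Einstein.
Variables (R : rcfType) (n : nat) (s : R).
Implicit Types u v w X Y : 'rV[R]_n.

Definition dotv u v : R := \sum_(i < n) u 0 i * v 0 i.
Definition normv v : R := Num.sqrt (dotv v v).

Definition in_ball v : Prop := normv v < s.

Definition gamma v : R := (Num.sqrt (1 - dotv v v / s ^+ 2))^-1.

Definition eadd u v : 'rV[R]_n :=
  (1 + dotv u v / s ^+ 2)^-1 *:
    (u + (gamma u)^-1 *: v + ((s ^+ 2)^-1 * (gamma u / (1 + gamma u)) * dotv u v) *: u).

Definition gyrodist X Y : R := normv (eadd (- X) Y).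

Definition lin_indep2 u v : Prop :=
  forall a b : R, a *: u + b *: v = 0 -> a = 0 /\ b = 0.

Definition gyrotriangle A1 A2 A3 : Prop :=
  [/\ in_ball A1, in_ball A2, in_ball A3 &
      lin_indep2 (eadd (- A1) A2) (eadd (- A1) A3)].

Definition in_gyroplane A1 A2 A3 X : Prop :=
  in_ball X /\
  exists a b : R, let w := a *: eadd (- A1) A2 + b *: eadd (- A1) A3 in
                  in_ball w /\ X = eadd A1 w.

Definition circumcenter A1 A2 A3 O (R0 : R) : Prop :=
  [/\ in_gyroplane A1 A2 A3 O, gyrodist O A1 = R0, gyrodist O A2 = R0 &
      gyrodist O A3 = R0].

Definition on_circumgyrocircle A1 A2 A3 O (R0 : R) X : Prop :=
  in_gyroplane A1 A2 A3 X /\ gyrodist O X = R0.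

(* gyroray from A through B: Euclidean ray intersected with the ball *)
Definition on_gyroray A B X : Prop :=
  in_ball X /\ exists l : R, 0 <= l /\ X = A + l *: (B - A).

Definition gyrobary3 A1 A2 A3 (m1 m2 m3 : R) : 'rV[R]_n :=
  (m1 * gamma A1 + m2 * gamma A2 + m3 * gamma A3)^-1 *:
    ((m1 * gamma A1) *: A1 + (m2 * gamma A2) *: A2 + (m3 * gamma A3) *: A3).

End Einstein.

(* Main.v *)
Require Import Defs.
From mathcomp Require Import all_boot all_order all_algebra.
From mathcomp Require Import ring lra.
Import Order.TTheory GRing.Theory Num.Theory.
Local Open Scope ring_scope.
Set Implicit Arguments. Unset Strict Implicit. Unset Printing Implicit Defensive.

Section L.
Variables (R : rcfType) (n : nat).
Implicit Types u v w : 'rV[R]_n.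

Lemma dotvC u v : dotv u v = dotv v u.
Proof. by apply: eq_bigr => i _; rewrite mulrC. Qed.
Lemma dotvDl u v w : dotv (u + v) w = dotv u w + dotv v w.
Proof. rewrite /dotv -big_split /=; apply: eq_bigr => i _; by rewrite !mxE mulrDl. Qed.
Lemma dotvZl a u v : dotv (a *: u) v = a * dotv u v.
Proof. rewrite /dotv mulr_sumr; apply: eq_bigr => i _; by rewrite !mxE mulrA. Qed.
Lemma dotvNl u v : dotv (- u) v = - dotv u v.
Proof. by rewrite -scaleN1r dotvZl mulN1r. Qed.
Lemma dotvBl u v w : dotv (u - v) w = dotv u w - dotv v w.
Proof. by rewrite dotvDl dotvNl. Qed.
Lemma dotvDr u v w : dotv w (u + v) = dotv w u + dotv w v.
Proof. by rewrite dotvC dotvDl !(dotvC w). Qed.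
Lemma dotvZr a u v : dotv v (a *: u) = a * dotv v u.
Proof. by rewrite dotvC dotvZl dotvC. Qed.
Lemma dotvNr u v : dotv v (- u) = - dotv v u.
Proof. by rewrite dotvC dotvNl dotvC. Qed.
Lemma dotvBr u v w : dotv w (u - v) = dotv w u - dotv w v.
Proof. by rewrite dotvDr dotvNr. Qed.
Lemma dotv0l v : dotv 0 v = 0.
Proof. by rewrite -(scale0r 0) dotvZl mul0r. Qed.
Lemma dotv_ge0 v : 0 <= dotv v v.
Proof. by apply: sumr_ge0 => i _; rewrite -expr2 sqr_ge0. Qed.
Lemma dotv_eq0 v : dotv v v = 0 -> v = 0.
Proof.
move=> h; apply/rowP => i; rewrite mxE.
have hp : forall j : 'I_n, xpredT j -> 0 <= v 0 j * v 0 j.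
  by move=> j _; rewrite -expr2 sqr_ge0.
have H0 := psumr_eq0P hp h (i:=i) isT.
by apply/eqP; move: H0 => /eqP; rewrite mulf_eq0 orbb.
Qed.
Lemma dot_comb x y u v : dotv (x *: u + y *: v) (x *: u + y *: v) =
  x^+2 * dotv u u + 2 * x * y * dotv u v + y^+2 * dotv v v.
Proof.
rewrite !dotvDl !dotvDr !dotvZl !dotvZr (dotvC v u); ring.
Qed.

Variable s : R.
Hypothesis hs : 0 < s.

Lemma ball_dot v : in_ball s v -> dotv v v < s^+2.
Proof.
rewrite /in_ball /normv => h.
have h1 := sqr_sqrtr (dotv_ge0 v); have h2 := sqrtr_ge0 (dotv v v).
rewrite -h1; nra.
Qed.

Lemma gamma_facts v : dotv v v < s^+2 ->
  [/\ 0 < 1 - dotv v v / s^+2, 0 < gamma s v &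
      gamma s v ^+2 * (1 - dotv v v / s^+2) = 1].
Proof.
move=> h.
have s2 : 0 < s^+2 by rewrite exprn_gt0.
have hq : 0 < 1 - dotv v v / s^+2.
  by rewrite subr_gt0 ltr_pdivrMr // mul1r.
have hsq : 0 < Num.sqrt (1 - dotv v v / s^+2) by rewrite sqrtr_gt0.
split => //; rewrite /gamma; first by rewrite invr_gt0.
rewrite exprVn -{2}(sqr_sqrtr (ltW hq)) mulVf //.
by rewrite expf_neq0 // gt_eqF.
Qed.

Lemma gamma_ge1 v : 0 < gamma s v -> 1 <= gamma s v.
Proof.
rewrite /gamma => h.
have hsq : 0 < Num.sqrt (1 - dotv v v / s^+2) by rewrite -invr_gt0.
have hq : 0 < 1 - dotv v v / s^+2 by rewrite -sqrtr_gt0.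
have hle : 1 - dotv v v / s^+2 <= 1.
  rewrite lerBlDr lerDl; apply: divr_ge0; first exact: dotv_ge0.
  by rewrite exprn_ge0 // ltW.
have : Num.sqrt (1 - dotv v v / s^+2) <= 1 by rewrite -[X in _ <= X]sqrtr1 ler_sqrt.
move=> h1; move: hsq h1; set q := Num.sqrt _ => hsq h1.
by rewrite -[1]invr1 lef_pV2 ?posrE.
Qed.

Lemma gamma_eq1 v : gamma s v = 1 -> v = 0.
Proof.
rewrite /gamma => h.
have h1 : Num.sqrt (1 - dotv v v / s^+2) = 1 by rewrite -[LHS]invrK h invr1.
have h2 : 1 - dotv v v / s^+2 = 1.
  case: (lerP 0 (1 - dotv v v / s^+2)) => h0.
    by rewrite -(sqr_sqrtr h0) h1 expr1n.
  by move: h1; rewrite ltr0_sqrtr // => /eqP; rewrite eq_sym oner_eq0.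
apply: dotv_eq0.
have s2 : s^+2 != 0 by rewrite expf_neq0 // gt_eqF.
move: h2 => /eqP; rewrite subr_eq addrC -subr_eq subrr eq_sym mulf_eq0 invr_eq0 (negPf s2) orbF.
by move/eqP.
Qed.
Lemma gamma_neg u : gamma s (- u) = gamma s u.
Proof. by rewrite /gamma dotvNl dotvNr opprK. Qed.

Lemma dot_lt u v : dotv u u < s^+2 -> dotv v v < s^+2 -> dotv u v < s^+2.
Proof.
move=> hu hv.
have := dotv_ge0 (u - v).
rewrite !dotvBl !dotvBr (dotvC v u) => h; nra.
Qed.

Lemma alg_eadd (a b c g d : R) :
  g^+2 * (1 - a / s^+2) = 1 -> d^+2 * (1 - c / s^+2) = 1 ->
  0 < g -> 0 < d -> 0 < 1 - b / s^+2 ->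
  1 - ((1 - b / s^+2)^-1)^+2 *
     ((s^+2)^-1 * (g / (1 + g)) * b - 1)^+2 * a / s^+2
  - ((1 - b / s^+2)^-1)^+2 * (2 * ((s^+2)^-1 * (g / (1 + g)) * b - 1) * g^-1 * b) / s^+2
  - ((1 - b / s^+2)^-1)^+2 * (g^-1 ^+2 * c) / s^+2
  = ((g * d * (1 - b / s^+2))^-1)^+2.
Proof.
move=> hg hd g0 d0 D0.
have s0 : s != 0 by rewrite gt_eqF.
have ha : a = s^+2 - s^+2 / g^+2.
  apply: (mulfI (x := g^+2)); first by rewrite expf_neq0 // gt_eqF.
  have -> : g^+2 * a = (g^+2 - 1) * s^+2 by rewrite -hg; field.
  by field; rewrite gt_eqF.
have hc : c = s^+2 - s^+2 / d^+2.
  apply: (mulfI (x := d^+2)); first by rewrite expf_neq0 // gt_eqF.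
  have -> : d^+2 * c = (d^+2 - 1) * s^+2 by rewrite -hd; field.
  by field; rewrite gt_eqF.
rewrite ha hc.
have g1 : 1 + g != 0 by rewrite gt_eqF //; lra.
have hb : b < s^+2.
  by move: D0; rewrite subr_gt0 ltr_pdivrMr ?mul1r // exprn_gt0.
field; rewrite s0 g1 !gt_eqF //= subr_gt0 //.
Qed.
Lemma gamma_eadd u v : dotv u u < s^+2 -> dotv v v < s^+2 ->
  0 < 1 - dotv u v / s^+2 /\
  gamma s (eadd s (-u) v) = gamma s u * gamma s v * (1 - dotv u v / s^+2).
Proof.
move=> hu hv.
have s2 : 0 < s^+2 by rewrite exprn_gt0.
have D0 : 0 < 1 - dotv u v / s^+2.
  by rewrite subr_gt0 ltr_pdivrMr // mul1r dot_lt.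
split => //.
have hI : eadd s (-u) v = (1 - dotv u v / s^+2)^-1 *:
   (((s^+2)^-1 * (gamma s u / (1 + gamma s u)) * dotv u v - 1) *: u
     + (gamma s u)^-1 *: v).
  rewrite /eadd gamma_neg dotvNl mulNr; congr (_ *: _).
  rewrite mulrN scalerN scaleNr opprK scalerBl scale1r.
  by rewrite [LHS]addrC addrA.
have [_ g0 hg] := gamma_facts hu.
have [_ d0 hd] := gamma_facts hv.
rewrite hI.
move: g0 hg d0 hd D0; set g := gamma s u; set d := gamma s v.
set a := dotv u u; set b := dotv u v; set c := dotv v v => g0 hg d0 hd D0.
rewrite /gamma dotvZl dotvZr dot_comb -/a -/b -/c.
have e : 1 - (1 - b / s ^+ 2)^-1 *
    ((1 - b / s ^+ 2)^-1 *
     (((s ^+ 2)^-1 * (g / (1 + g)) * b - 1) ^+ 2 * a +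
      2 * ((s ^+ 2)^-1 * (g / (1 + g)) * b - 1) * g^-1 * b +
      g^-1 ^+ 2 * c)) / s ^+ 2 = ((g * d * (1 - b / s^+2))^-1)^+2.
  rewrite -(alg_eadd hg hd g0 d0 D0); ring.
rewrite e sqrtr_sqr ger0_norm ?invrK //.
by rewrite invr_ge0 ltW // !mulr_gt0.
Qed.
Lemma same_point u v : dotv u u < s^+2 -> dotv v v < s^+2 ->
  gamma s u * gamma s v * (1 - dotv u v / s^+2) = 1 -> u = v.
Proof.
move=> hu hv h.
have [_ g0 hg] := gamma_facts hu.
have [_ d0 hd] := gamma_facts hv.
have s2 : 0 < s^+2 by rewrite exprn_gt0.
have s0 : s^+2 != 0 by rewrite gt_eqF.
have hdd := dotv_ge0 (u - v).
rewrite !dotvBl !dotvBr (dotvC v u) in hdd.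
apply/eqP; rewrite -subr_eq0; apply/eqP/dotv_eq0.
rewrite !dotvBl !dotvBr (dotvC v u).
move: hg hd h g0 d0 hu hv hdd; set g := gamma s u; set d := gamma s v.
set a := dotv u u; set b := dotv u v; set c := dotv v v => hg hd h g0 d0 hu hv hdd.
have E : (s^+2 - b)^+2 = (s^+2 - a) * (s^+2 - c).
  have e1 : (g * d)^+2 * ((1 - b / s^+2)^+2) = (g*d)^+2 * ((1 - a/s^+2) * (1 - c/s^+2)).
    by rewrite -exprMn h exprMn mulrACA hg hd !expr1n mulr1.
  have := mulfI _ e1; rewrite expf_neq0 ?mulf_neq0 ?gt_eqF // => /(_ isT) e2.
  have sn : s != 0 by rewrite gt_eqF.
  have ex : forall x, s^+2 - x = s^+2 * (1 - x / s^+2) by move=> x; field.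
  by rewrite !(ex b) (ex a) (ex c) exprMn e2; ring.
have E2 : s^+2 * (a - b - b + c) = a * c - b^+2.
  move: E; rewrite !expr2 => E; nra.
have [a0|apos] : a = 0 \/ 0 < a.
  by have := dotv_ge0 u; rewrite le_eqVlt => /orP [/eqP ->|->]; [left|right].
  have u0 : u = 0 by apply: dotv_eq0.
  have b0 : b = 0 by rewrite /b u0 dotv0l.
  rewrite a0 b0 in E2 *.
  have c0 : c = 0 by move: E2; rewrite !expr2 => E2; nra.
  by rewrite c0; ring.
have hw := dotv_ge0 (v - (b / a) *: u).
rewrite !dotvBl !dotvBr !dotvZl !dotvZr -/a -/c (dotvC v u) -/b in hw.
have hw2 : 0 <= a * c - b^+2.
  have -> : a * c - b^+2 = a * (c - b / a * b - (b / a * b - b / a * (b / a * a))).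
    by field; rewrite gt_eqF.
  by rewrite mulr_ge0 // ltW.
have hle : a * c - b^+2 <= a * (a - b - b + c).
  have : 0 <= (a - b)^+2 by apply: sqr_ge0.
  rewrite !expr2 => h2; nra.
have : (s^+2 - a) * (a - b - b + c) <= 0.
  rewrite mulrBl E2; lra.
move=> h3.
have h4 : 0 < s^+2 - a by rewrite subr_gt0.
have h5 : 0 <= a - b - b + c by lra.
nra.
Qed.
Lemma gyro_gamma (O X Y : 'rV[R]_n) : gyrodist s O X = gyrodist s O Y ->
  gamma s (eadd s (-O) X) = gamma s (eadd s (-O) Y).
Proof.
rewrite /gyrodist /normv => h.
have e : dotv (eadd s (-O) X) (eadd s (-O) X) = dotv (eadd s (-O) Y) (eadd s (-O) Y).
  by rewrite -(sqr_sqrtr (dotv_ge0 (eadd s (-O) X))) h sqr_sqrtr // dotv_ge0.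
by rewrite /gamma e.
Qed.
End L.
Lemma main_alg (R : rcfType) (s t l g1 g2 g3 gq k a11 a22 a33 a12 a13 a23 o1 o2 o3 G12 G13 G23 : R) :
  0 < s -> 0 <= t <= 1 -> l != 0 -> 0 < g1 -> 0 < g2 -> 0 < g3 -> 0 < gq -> 0 < k ->
  g1^+2 * (1 - a11 / s^+2) = 1 -> g2^+2 * (1 - a22 / s^+2) = 1 -> g3^+2 * (1 - a33 / s^+2) = 1 ->
  g1 * (1 - o1 / s^+2) = k -> g2 * (1 - o2 / s^+2) = k -> g3 * (1 - o3 / s^+2) = k ->
  G12 = g1 * g2 * (1 - a12 / s^+2) -> G13 = g1 * g3 * (1 - a13 / s^+2) ->
  G23 = g2 * g3 * (1 - a23 / s^+2) ->
  let W0 := (1 - t) * g1 + t * g2 in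
  let x := l / W0 * ((1 - t) * g1) in
  let y := l / W0 * (t * g2) in
  let z := 1 - l in
  gq * (1 - (x * o1 + y * o2 + z * o3) / s^+2) = k ->
  gq^+2 * (1 - (x^+2 * a11 + y^+2 * a22 + z^+2 * a33 + 2 * x * y * a12
                + 2 * x * z * a13 + 2 * y * z * a23) / s^+2) = 1 ->
  l * (- ((G12 - 1) * (1 - t) * t) * g3) = (1 - l) * (G13 - 1 + (G23 - G13) * t) * W0.
Proof.
move=> s0 /andP[t0 t1] l0 g10 g20 g30 gq0 k0 h11 h22 h33 ho1 ho2 ho3 hG12 hG13 hG23 W0 x y z E1 E2.
have sn : s != 0 by rewrite gt_eqF.
have W0p : 0 < W0.
  rewrite /W0; case: (ltrP 0 t) => ht.
    by apply: ltr_pwDr; [rewrite mulr_gt0 | rewrite mulr_ge0 // ?subr_ge0 // ltW].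
  have -> : t = 0 by apply/eqP; rewrite eq_le ht t0.
  by rewrite subr0 mul1r mul0r addr0.
have W0n : W0 != 0 by rewrite gt_eqF.
have sq : forall (g a : R), 0 < g -> g^+2 * (1 - a / s^+2) = 1 -> a = s^+2 - s^+2 / g^+2.
  move=> g a g0 h.
  apply: (mulfI (x := g^+2)); first by rewrite expf_neq0 // gt_eqF.
  have -> : g^+2 * a = (g^+2 - 1) * s^+2 by rewrite -h; field.
  by field; rewrite gt_eqF.
have lin : forall (g o : R), 0 < g -> g * (1 - o / s^+2) = k -> o = s^+2 - s^+2 * k / g.
  move=> g o g0 h.
  apply: (mulfI (x := g)); first by rewrite gt_eqF.
  have -> : g * o = (g - k) * s^+2 by rewrite -h; field.
  by field; rewrite gt_eqF.
have lin2 : forall (G gi gj a : R), 0 < gi -> 0 < gj -> G = gi * gj * (1 - a / s^+2) ->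
    a = s^+2 - s^+2 * G / (gi * gj).
  move=> G gi gj a gi0 gj0 ->; field; rewrite !gt_eqF //.
have e11 := sq _ _ g10 h11; have e22 := sq _ _ g20 h22; have e33 := sq _ _ g30 h33.
have f1 := lin _ _ g10 ho1; have f2 := lin _ _ g20 ho2; have f3 := lin _ _ g30 ho3.
have e12 := lin2 _ _ _ _ g10 g20 hG12; have e13 := lin2 _ _ _ _ g10 g30 hG13.
have e23 := lin2 _ _ _ _ g20 g30 hG23.
rewrite e11 e22 e33 f1 f2 f3 e12 e13 e23 in E1 E2.
rewrite /x /y /z in E1 E2.
set al := (1 - l) / g3; set be := l / W0.
have F1 : gq * (al + be) = 1.
  have : k * (gq * (al + be)) = k * 1.
    rewrite -[in RHS]E1 /al /be /W0; field.
    by rewrite !gt_eqF // -/W0.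
  by apply: mulfI; rewrite gt_eqF.
move: E2; set M := (1 - _) => E2.
have F2 : M = (al + be)^+2.
  apply: (mulfI (x := gq^+2)); first by rewrite expf_neq0 // gt_eqF.
  by rewrite E2 -exprMn F1 expr1n.
set c := G13 - 1 + (G23 - G13) * t.
set m3 := - ((G12 - 1) * (1 - t) * t).
have F3 : M - (al + be)^+2 = 2 * be * (al * c - be * m3).
  rewrite /M /al /be /c /m3 /W0; field.
  by rewrite !gt_eqF // -/W0.
rewrite F2 subrr in F3.
have ben : be != 0 by rewrite /be mulf_neq0 // invr_eq0.
have F4 : al * c = be * m3.
  apply/eqP; rewrite -subr_eq0; apply/eqP.
  move: F3 => /eqP; rewrite eq_sym mulf_eq0 mulf_eq0 (negPf ben) pnatr_eq0 /=.
  by move/eqP.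
move: F4; rewrite /al /be => F4.
have : (1 - l) / g3 * c * (g3 * W0) = l / W0 * m3 * (g3 * W0) by rewrite F4.
move=> F5; move: F5.
have g3n : g3 != 0 by rewrite gt_eqF.
move=> F5.
have -> : l * (m3 * g3) = l / W0 * m3 * (g3 * W0) by field.
rewrite -F5; field.
exact g3n.
Qed.

Unset Implicit Arguments.
Theorem mainTheorem17 (R : rcfType) (n : nat) (s : R)
  (A1 A2 A3 O : 'rV[R]_n) (R0 t1 : R) (Q : 'rV[R]_n) :
  (2 <= n)%N -> 0 < s ->
  gyrotriangle s A1 A2 A3 ->
  circumcenter s A1 A2 A3 O R0 ->
  0 <= t1 <= 1 ->
  let P := gyrobary3 s A1 A2 A3 (1 - t1) t1 0 in
  on_gyroray s A3 P Q ->
  on_circumgyrocircle s A1 A2 A3 O R0 Q ->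
  Q <> A3 ->
  let g12 := gamma s (eadd s (- A1) A2) in
  let g13 := gamma s (eadd s (- A1) A3) in
  let g23 := gamma s (eadd s (- A2) A3) in
  Q = gyrobary3 s A1 A2 A3
        ((g13 - 1 + (g23 - g13) * t1) * (1 - t1))
        ((g13 - 1 + (g23 - g13) * t1) * t1)
        (- ((g12 - 1) * (1 - t1) * t1)).
Proof.
move=> hn hs [b1 b2 b3 hli] [[bO _] hd1 hd2 hd3] ht P [bQ [l [hl0 hQ]]] [_ hdQ] hQA3
  g12 g13 g23.
have d1 := ball_dot b1; have d2 := ball_dot b2; have d3 := ball_dot b3.
have dO := ball_dot bO; have dQ := ball_dot bQ.
have [_ g1p h11] := gamma_facts hs d1; have [_ g2p h22] := gamma_facts hs d2.
have [_ g3p h33] := gamma_facts hs d3; have [_ gOp _] := gamma_facts hs dO.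
have [_ gQp hQQ] := gamma_facts hs dQ.
have [D12 e12] := gamma_eadd hs d1 d2; have [D13 e13] := gamma_eadd hs d1 d3.
have [D23 e23] := gamma_eadd hs d2 d3.
have [DO1 eO1] := gamma_eadd hs dO d1; have [DO2 eO2] := gamma_eadd hs dO d2.
have [DO3 eO3] := gamma_eadd hs dO d3; have [DOQ eOQ] := gamma_eadd hs dO dQ.
have gOn : gamma s O != 0 by rewrite gt_eqF.
have k1 : gamma s A1 * (1 - dotv O A1 / s^+2) = gamma s A3 * (1 - dotv O A3 / s^+2).
  apply: (mulfI gOn); rewrite !mulrA -eO1 -eO3; apply: gyro_gamma; by rewrite hd1 hd3.
have k2 : gamma s A2 * (1 - dotv O A2 / s^+2) = gamma s A3 * (1 - dotv O A3 / s^+2).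
  apply: (mulfI gOn); rewrite !mulrA -eO2 -eO3; apply: gyro_gamma; by rewrite hd2 hd3.
have kQ : gamma s Q * (1 - dotv O Q / s^+2) = gamma s A3 * (1 - dotv O A3 / s^+2).
  apply: (mulfI gOn); rewrite !mulrA -eOQ -eO3; apply: gyro_gamma; by rewrite hdQ hd3.
have kp : 0 < gamma s A3 * (1 - dotv O A3 / s^+2) by rewrite mulr_gt0.
move: ht => /andP [t0 t1'].
set W0 := (1 - t1) * gamma s A1 + t1 * gamma s A2.
set x := l / W0 * ((1 - t1) * gamma s A1).
set y := l / W0 * (t1 * gamma s A2).
set z := 1 - l.
have hQ' : Q = x *: A1 + y *: A2 + z *: A3.
  rewrite hQ /P /gyrobary3 !mul0r !addr0 scale0r addr0 -/W0.
  apply/rowP => i; rewrite !mxE /x /y /z; ring.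
have eOQ' : dotv O Q = x * dotv O A1 + y * dotv O A2 + z * dotv O A3.
  by rewrite hQ' !dotvDr !dotvZr.
have eQQ : dotv Q Q = x^+2 * dotv A1 A1 + y^+2 * dotv A2 A2 + z^+2 * dotv A3 A3
    + 2 * x * y * dotv A1 A2 + 2 * x * z * dotv A1 A3 + 2 * y * z * dotv A2 A3.
  rewrite hQ' !dotvDl !dotvDr !dotvZl !dotvZr (dotvC A2 A1) (dotvC A3 A1) (dotvC A3 A2).
  ring.
have ln : l != 0.
  apply/eqP => l0; apply: hQA3; by rewrite hQ l0 scale0r addr0.
have key := main_alg hs (introT andP (conj t0 t1')) ln g1p g2p g3p gQp kp h11 h22 h33 k1 k2
  (erefl _) e12 e13 e23.
rewrite -/W0 -/x -/y -/z in key.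
rewrite eOQ' in kQ; rewrite eQQ in hQQ.
have {}key := key kQ hQQ.
rewrite -/g12 -/g13 -/g23 in key.
have g13ge : 1 <= g13 by apply: (gamma_ge1 hs); rewrite /g13 e13 !mulr_gt0.
have g23ge : 1 <= g23 by apply: (gamma_ge1 hs); rewrite /g23 e23 !mulr_gt0.
set c := g13 - 1 + (g23 - g13) * t1 in key *.
set m3 := - ((g12 - 1) * (1 - t1) * t1) in key *.
have cn : c != 0.
  apply/eqP => c0.
  have hc : c = (1 - t1) * (g13 - 1) + t1 * (g23 - 1) by rewrite /c; ring.
  case: (ltrP t1 1) => tl.
    have g131 : g13 = 1 by nra.
    have e0 := gamma_eq1 hs g131.
    have [_ h10] := hli 0 1 (ltac:(by rewrite e0 scaler0 scale0r addr0)).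
    by move/eqP: h10; rewrite oner_eq0.
  have tt : t1 = 1 by apply/eqP; rewrite eq_le t1' tl.
  have g231 : g23 = 1 by rewrite tt in hc; nra.
  have A23 : A2 = A3 by apply: (same_point hs d2 d3); rewrite -e23.
  have [h10 _] := hli 1 (-1) (ltac:(by rewrite A23 scaleN1r scale1r subrr)).
  by move/eqP: h10; rewrite oner_eq0.
have W0p : 0 < W0.
  rewrite /W0; case: (ltrP 0 t1) => ht.
    by apply: ltr_pwDr; [rewrite mulr_gt0 | rewrite mulr_ge0 // ?subr_ge0 // ltW].
  have -> : t1 = 0 by apply/eqP; rewrite eq_le ht t0.
  by rewrite subr0 mul1r mul0r addr0.
have W0n : W0 != 0 by rewrite gt_eqF.
have m3g3 : m3 * gamma s A3 = z * c * W0 / l.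
  by apply: (mulfI ln); rewrite key; field.
have Den : c * (1 - t1) * gamma s A1 + c * t1 * gamma s A2 + m3 * gamma s A3 = c * W0 / l.
  rewrite m3g3 /z /W0; field; exact: ln.
rewrite hQ' /gyrobary3 Den m3g3; apply/rowP => i; rewrite !mxE /x /y /z.
field.
by rewrite ln W0n cn.
Qed.
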